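(* The complex $$\cdots\xrightarrow{Q}\mathcal{D}\otimes H^\ast_{-5}\xrightarrow{Q}\mathcal{D}\otimes H^\ast_{-3}\xrightarrow{Q}\mathcal{D}\otimes H^\ast_{-1}\to0$$ is exact at $\mathcal{D}\otimes H^\ast_{-2n-1}$ for every $n\ge1$; that is, the kernel of $Q:\mathcal{D}\otimes H^\ast_{-2n-1}\to\mathcal{D}\otimes H^\ast_{-2n+1}$ equals $Q(\mathcal{D}\otimes H^\ast_{-2n-3})$.
   Context: $\mathcal{D}=\mathbb{C}[\partial_1,\partial_3,\partial_5,\ldots]$ is a polynomial ring in commuting variables $\partial_{2n-1}$, $n\ge1$. Fermions $\psi_n,\psi^\ast_n$ ($n\in2\mathbb{Z}+1$) satisfy $[\psi_m,\psi_n]_+=[\psi^\ast_m,\psi^\ast_n]_+=0$, $[\psi^\ast_m,\psi_n]_+=\delta_{mn}$. For odd $m$ the bra vacuum $\langle m|$ satisfies $\langle m|\psi_n=0$ ($n\le m$), $\langle m|\psi^\ast_n=0$ ($n>m$), $\langle m-2|\psi_m=\langle m|$; $H^\ast_m$ is the Fock space of bra vectors obtained from $\langle m|$ by right multiplication with products having equal numbers of $\psi$'s and $\psi^\ast$'s. $Q:\mathcal{D}\otimes H^\ast_m\to\mathcal{D}\otimes H^\ast_{m+2}$ is $Q(P\otimes v)=\sum_{n\ge1}\partial_{2n-1}P\otimes v\,\psi_{-(2n-1)}$; $Q^2=0$. *)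

(* Defs.v *)
From HB Require Import structures.
From mathcomp Require Import all_boot all_order all_algebra.
From mathcomp Require Import finmap multiset.
From mathcomp Require Import monalg.
From mathcomp Require Import complex reals.
Set Implicit Arguments. Unset Strict Implicit. Unset Printing Implicit Defensive.
Import Order.TTheory GRing.Theory Num.Theory.
Local Open Scope fset_scope.
Local Open Scope ring_scope.

(* Odd integers are indexed by j : int, standing for 2j+1.
   A bra basis vector <S| of the (charged) fermionic Fock space is given by a
   set S of odd integers differing from the Dirac sea S_{-1} = {n <= -1}
   by finitely many elements; we store the finite set
   T = S (symmetric difference) S_{-1}  (in the j-indexing). *)
Definition state := {fset int}.

Definition occupied (T : state) (j : int) : bool := (j \in T) (+) (j < 0).

Definition toggle (T : state) (j : int) : state :=
  if j \in T then T `\ j else j |` T.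

(* number of elements s of S with s > 2j+1 (finite) *)
Definition occ_above (T : state) (j : int) : nat :=
  (#|` [fset x in T | ((j < x) && (0 <= x))%R]|
   + (if (j < 0)%R then count (fun i : nat => occupied T (j + 1 + i%:Z)%R)
                          (iota 0 `|(j + 1)%R|%N) else 0))%N.

(* charge: <S| lies in H^*_m  iff  m = 2 * charge T - 1
   (<m| has S = {n odd, n <= m}). *)
Definition charge (T : state) : int :=
  (#|` [fset x in T | (0 <= x)%R]|%:Z - #|` [fset x in T | (x < 0)%R]|%:Z).

(* A monomial of D = C[d_1, d_3, d_5, ...] is a finite multiset of
   variable indices, k standing for d_{2k+1}. *)
Definition basis := ({mset nat}%mset * state)%type.
Definition DH (C : nzRingType) := {malg C[basis]}.

Section Ops.
Variable C : nzRingType.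

Definition in_sector (m : int) (x : DH C) : Prop :=
  forall b, b \in msupp x -> 2 * charge b.2 - 1 = m.

(* right action of psi_{2j+1} on bras:
   <S| psi_n = (-1)^#{s in S, s > n} <S u {n}|  if n \notin S, 0 otherwise *)
Definition psi (j : int) (x : DH C) : DH C :=
  \sum_(b <- msupp x)
     (if occupied b.2 j then 0
      else << ((-1) ^+ occ_above b.2 j * x@_b) *g (b.1, toggle b.2 j) >>).

Definition dmul (k : nat) (x : DH C) : DH C :=
  \sum_(b <- msupp x) << x@_b *g ((k +` b.1)%mset, b.2) >>.

(* Q (P (x) v) = sum_{n>=1} d_{2n-1} P (x) v psi_{-(2n-1)}.
   With j = -n (i.e. 2j+1 = -(2n-1)) and variable index k = n-1 = |j+1|;
   only the j < 0 with j \in T (i.e. -(2n-1) \notin S) give nonzero terms,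
   so the sum is restricted to those (finitely many) j. *)
Definition Q (x : DH C) : DH C :=
  \sum_(b <- msupp x) \sum_(j <- b.2 | j < 0)
     dmul `|(j + 1)%R|%N (psi j << x@_b *g b >>).

End Ops.

(* Main.v *)
Require Import Defs.
From HB Require Import structures.
From mathcomp Require Import all_boot all_order all_algebra.
From mathcomp Require Import finmap multiset.
From mathcomp Require Import monalg.
From mathcomp Require Import complex reals.
From mathcomp Require Import zify ring.
Import Order.TTheory GRing.Theory Num.Theory.
Local Open Scope ring_scope.
Set Implicit Arguments. Unset Strict Implicit. Unset Printing Implicit Defensive.

Section Lin.
Variable C : numFieldType.
Local Notation DH := {malg C[basis]}.

Definition L (f : basis -> DH) (x : DH) : DH := \sum_(b <- msupp x) x@_b *: f b.

Lemma LEw (d : {fset basis}) f x : (msupp x `<=` d)%fset ->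
  L f x = \sum_(b <- d) x@_b *: f b.
Proof.
move=> sub; rewrite /L (big_fset_incl _ sub) // => b _ nb.
by rewrite mcoeff_outdom // scale0r.
Qed.

Lemma LD f x y : L f (x + y) = L f x + L f y.
Proof.
have s1 : (msupp x `<=` msupp x `|` msupp y)%fset by apply: fsubsetUl.
have s2 : (msupp y `<=` msupp x `|` msupp y)%fset by apply: fsubsetUr.
rewrite (LEw _ (msuppD_le x y)) (LEw _ s1) (LEw _ s2) -big_split /=.
by apply: eq_bigr => b _; rewrite mcoeffD scalerDl.
Qed.

Lemma L0 f : L f 0 = 0.
Proof. by rewrite /L msupp0 big_nil. Qed.

Lemma LZ f c x : L f (c *: x) = c *: L f x.
Proof.
rewrite (LEw _ (msuppZ_le c x)) /L scaler_sumr; apply: eq_bigr => b _.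
by rewrite mcoeffZ scalerA.
Qed.

Lemma LN f x : L f (- x) = - L f x.
Proof. by rewrite -scaleN1r LZ scaleN1r. Qed.

Lemma LB f x y : L f (x - y) = L f x - L f y.
Proof. by rewrite LD LN. Qed.

Lemma Lsum f I (s : seq I) (P : pred I) (F : I -> DH) :
  L f (\sum_(i <- s | P i) F i) = \sum_(i <- s | P i) L f (F i).
Proof. exact: (big_morph (L f) (LD f) (L0 f)). Qed.

Lemma LU f c b : L f << c *g b >> = c *: f b.
Proof. by rewrite (LEw _ msuppU_le) big_seq_fset1 mcoeffUU. Qed.

Lemma scaleU (c : C) b : c *: (<< b >> : DH) = << c *g b >>.
Proof.
apply/malgP => k; rewrite mcoeffZ.
rewrite [X in _ * X](@mcoeffU basis C) (@mcoeffU basis C).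
by case: eqP; rewrite ?mulr1 ?mulr0.
Qed.

Lemma L1 f b : L f << b >> = f b.
Proof. by rewrite LU scale1r. Qed.

Lemma Lid x : L (fun b => << b >>) x = x.
Proof.
rewrite {2}(monalgE x) /L; apply: eq_bigr => b _; exact: scaleU.
Qed.

Lemma Lext f g x : {in msupp x, f =1 g} -> L f x = L g x.
Proof.
move=> e; rewrite /L; apply: eq_big_seq => b bx.
by rewrite e.
Qed.

Lemma Lcomp f g x : L f (L g x) = L (fun b => L f (g b)) x.
Proof. by rewrite [L g x]/L Lsum [in RHS]/L; apply: eq_bigr => b _; rewrite LZ. Qed.

Lemma Lfun_add f g x : L (fun b => f b + g b) x = L f x + L g x.
Proof. by rewrite /L -big_split; apply: eq_bigr => b _; rewrite scalerDr. Qed.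

Lemma Lfun_opp f x : L (fun b => - f b) x = - L f x.
Proof. by rewrite /L -sumrN; apply: eq_bigr => b _; rewrite scalerN. Qed.

Lemma Lfun_scale f (c : basis -> C) g x :
  L (fun b => c b *: L f (g b)) x = L f (L (fun b => c b *: g b) x).
Proof. by rewrite Lcomp; apply: eq_bigr => b _; rewrite LZ. Qed.

Lemma Lfun0 x : L (fun _ => 0) x = 0.
Proof. by rewrite /L big1 // => b _; rewrite scaler0. Qed.

Lemma sector0 m : in_sector m (0 : DH).
Proof. by move=> b; rewrite msupp0. Qed.

Lemma sectorD m (x y : DH) : in_sector m x -> in_sector m y -> in_sector m (x + y).
Proof.
move=> hx hy b /(fsubsetP (msuppD_le x y)); rewrite in_fsetU => /orP[/hx|/hy] //.
Qed.

Lemma sectorZ m c (x : DH) : in_sector m x -> in_sector m (c *: x).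
Proof. by move=> hx b /(fsubsetP (msuppZ_le c x)) /hx. Qed.

Lemma sector_sum m I (s : seq I) (P : pred I) (F : I -> DH) :
  (forall i, P i -> in_sector m (F i)) -> in_sector m (\sum_(i <- s | P i) F i).
Proof.
move=> h; elim/big_ind: _ => //; [exact: sector0| exact: sectorD].
Qed.

Lemma sectorU m c b : 2 * charge b.2 - 1 = m -> in_sector m (<< c *g b >> : DH).
Proof. by move=> e k /(fsubsetP msuppU_le); rewrite inE => /eqP ->. Qed.

Lemma sector_sum_seq (m : int) (I : eqType) (s : seq I) (F : I -> DH) :
  (forall i, i \in s -> in_sector m (F i)) -> in_sector m (\sum_(i <- s) F i).
Proof.
elim: s => [|a s IH] h; first by rewrite big_nil; exact: sector0.
rewrite big_cons; apply: sectorD; first by apply: h; rewrite inE eqxx.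
by apply: IH => i si; apply: h; rewrite inE si orbT.
Qed.

Lemma sectorL m f x : (forall b, b \in msupp x -> in_sector m (f b)) -> in_sector m (L f x).
Proof.
move=> h; rewrite /L; apply: sector_sum_seq => b /h; exact: sectorZ.
Qed.

End Lin.

Section Comb.

Lemma in_toggle (T : state) j x : (x \in toggle T j) = (x == j) (+) (x \in T).
Proof.
rewrite /toggle; case: ifP => jT; rewrite !inE; case: (eqVneq x j) => [->|] //=.
by rewrite jT.
by rewrite jT.
Qed.

Lemma toggleC (T : state) j k : toggle (toggle T j) k = toggle (toggle T k) j.
Proof.
apply/fsetP => x; rewrite !in_toggle.
by case: (x == j); case: (x == k); case: (x \in T).
Qed.

Lemma toggleK (T : state) j : toggle (toggle T j) j = T.
Proof.
apply/fsetP => x; rewrite !in_toggle.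
by case: (x == j); case: (x \in T).
Qed.

Lemma occupied_toggle (T : state) j y :
  occupied (toggle T j) y = occupied T y (+) (y == j).
Proof.
rewrite /occupied in_toggle.
by case: (y == j); case: (y \in T); case: (y < 0).
Qed.

Definition pos (T : state) := #|` [fset x in T | (0 <= x)%R]%fset|.
Definition neg (T : state) := #|` [fset x in T | (x < 0)%R]%fset|.

Lemma pos_toggle (T : state) a : pos (toggle T (Negz a)) = pos T.
Proof.
rewrite /pos; congr (#|` _|); apply/fsetP => x; rewrite !inE in_toggle.
case: (eqVneq x (Negz a)) => [->|_] //=.
by rewrite !andbF.
Qed.

Lemma oa_neg (T : state) b : occ_above T (Negz b) =
  (pos T + count (fun i : nat => occupied T (Negz b + 1 + i%:Z)%R) (iota 0 b))%N.
Proof.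
rewrite /occ_above /pos.
have -> : [fset x in T | ((Negz b < x) && (0 <= x))%R]%fset = [fset x in T | (0 <= x)%R]%fset.
  apply/fsetP => x; rewrite !inE; case: (x \in T) => //=.
  case: (boolP (0 <= x)) => h; rewrite ?andbF ?andbT //.
  by apply: (lt_le_trans _ h).
have -> : (`|(Negz b + 1)%R|)%N = b.
  rewrite NegzE; have -> : - (b.+1)%:Z + 1 = - b%:Z by lia.
  by rewrite abszN absz_nat.
by [].
Qed.

Lemma odd_count_addb (I : Type) (p q : pred I) s :
  odd (count (fun i => p i (+) q i) s) = odd (count p s) (+) odd (count q s).
Proof.
elim: s => //= x s IH; rewrite !oddD IH !oddb.
by case: (p x); case: (q x); case: (odd (count p s)); case: (odd (count q s)).
Qed.

Lemma count_hit a b :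
  count (fun i : nat => Negz b + 1 + i%:Z == Negz a) (iota 0 b) = (a < b)%N.
Proof.
case: (ltnP a b) => ab.
  rewrite (@eq_in_count _ _ (pred1 (b - a.+1)%N)).
    by rewrite (count_uniq_mem _ (iota_uniq 0 b)) mem_iota /=; apply/eqP; lia.
  move=> i; rewrite mem_iota => /andP[_ ib] /=.
  by apply/eqP/eqP; rewrite !NegzE; lia.
rewrite (@eq_in_count _ _ pred0) ?count_pred0 //.
move=> i; rewrite mem_iota => /andP[_ ib] /=.
by apply/eqP; rewrite !NegzE; lia.
Qed.

Lemma charge_toggle (T : state) a :
  charge (toggle T (Negz a)) = charge T + (if Negz a \in T then 1 else -1).
Proof.
rewrite /charge; fold (pos (toggle T (Negz a))); rewrite pos_toggle; fold (pos T).
case: (boolP (Negz a \in T)) => aT.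
  have -> : [fset x in toggle T (Negz a) | (x < 0)%R]%fset =
            ([fset x in T | (x < 0)%R] `\ Negz a)%fset.
    apply/fsetP => x; rewrite !inE in_toggle.
    by case: (eqVneq x (Negz a)) => [->|_] //=; rewrite aT.
  have := cardfsD1 (Negz a) [fset x in T | (x < 0)%R]%fset.
  rewrite !inE aT /= => ->; lia.
have -> : [fset x in toggle T (Negz a) | (x < 0)%R]%fset =
          (Negz a |` [fset x in T | (x < 0)%R])%fset.
  apply/fsetP => x; rewrite !inE in_toggle.
  by case: (eqVneq x (Negz a)) => [->|_] //=; rewrite (negbTE aT).
rewrite cardfsU1 !inE (negbTE aT) /=; lia.
Qed.

End Comb.

Section Sign.
Variable C : numFieldType.

Definition sgn (T : state) (b : nat) : C := (-1) ^+ occ_above T (Negz b).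

Lemma sgn_toggle T a b :
  sgn (toggle T (Negz a)) b = (if (a < b)%N then -1 else 1) * sgn T b.
Proof.
rewrite /sgn !oa_neg pos_toggle.
rewrite (@eq_count _ _ (fun i : nat => occupied T (Negz b + 1 + i%:Z)
           (+) (Negz b + 1 + i%:Z == Negz a))); last first.
  by move=> i; rewrite occupied_toggle.
rewrite -signr_odd -[in RHS]signr_odd !oddD odd_count_addb count_hit oddb.
rewrite !signr_addb; case: (a < b)%N; rewrite /= ?expr1 ?expr0 ?mulr1 ?mul1r //.
by rewrite mulrA mulrN1 mulNr mul1r.
Qed.

Lemma sgn_sq T b : sgn T b * sgn T b = 1.
Proof. by rewrite /sgn -exprD -signr_odd oddD addbb. Qed.

End Sign.

Lemma eqNegz a b : (Negz a == Negz b) = (a == b).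
Proof. by apply/eqP/eqP => [[]|->]. Qed.

Lemma Negz_inj : injective Negz.
Proof. by move=> a b []. Qed.

Definition bounded (N : nat) (b : basis) :=
  forall i, (N <= i)%N -> b.1 i = 0%N /\ Negz i \notin b.2.

Definition bnd (b : basis) : nat :=
  maxn (\max_(i <- finsupp b.1) i).+1 (\max_(x <- b.2) `|x|%N).

Lemma bnd_bounded b : bounded (bnd b) b.
Proof.
move=> i hi; split.
  case: (eqVneq (b.1 i) 0%N) => // h.
  have : i \in finsupp b.1 by rewrite mem_finsupp.
  move=> ib.
  have le : (i <= \max_(k <- finsupp b.1) k)%N by apply: (leq_bigmax_seq (F := fun k => k)).
  move: hi le; rewrite /bnd; lia.
apply/negP => h.
have le : (`|Negz i|%N <= \max_(x <- b.2) `|x|%N)%N.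
  by apply: (leq_bigmax_seq (F := fun x : int => `|x|%N)).
move: hi le; rewrite /bnd /=; lia.
Qed.

Lemma bounded_mono N N' b : (N <= N')%N -> bounded N b -> bounded N' b.
Proof. by move=> le h i hi; apply: h; apply: leq_trans hi. Qed.

Lemma bounded_q N b i : bounded N b -> (i < N)%N ->
  bounded N ((i +` b.1)%mset, toggle b.2 (Negz i)).
Proof.
move=> h iN k Nk; have [h1 h2] := h k Nk; split => /=.
  rewrite mset1DE h1; case: eqP => // e; move: iN Nk; lia.
rewrite in_toggle eqNegz (negbTE h2); apply/eqP; move: iN Nk; lia.
Qed.

Lemma bounded_h N b i : bounded N b -> (i < N)%N ->
  bounded N ((b.1 `\ i)%mset, toggle b.2 (Negz i)).
Proof.
move=> h iN k Nk; have [h1 h2] := h k Nk; split => /=.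
  by rewrite msetB1E h1.
rewrite in_toggle eqNegz (negbTE h2); apply/eqP; move: iN Nk; lia.
Qed.

Lemma sum_neg (V : zmodType) (T : state) N (F : int -> V) :
  (forall i, (N <= i)%N -> Negz i \notin T) ->
  \sum_(j <- T | (j < 0)%R) F j =
  \sum_(0 <= i < N) (if Negz i \in T then F (Negz i) else 0).
Proof.
move=> hb; rewrite -big_filter -[RHS]big_mkcond /= -[RHS]big_filter.
rewrite -(big_map Negz (fun _ => true) F).
apply: perm_big; apply: uniq_perm.
- by apply: filter_uniq; apply: fset_uniq.
- by rewrite (map_inj_uniq Negz_inj); apply: filter_uniq; apply: iota_uniq.
move=> x; rewrite mem_filter; case: x => [k|k].
  rewrite andFb; apply/esym/negP => /mapP [i _] //.
rewrite /= (mem_map Negz_inj) mem_filter mem_index_iota /=.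
case: (boolP (Negz k \in T)) => //= kT.
case: (ltnP k N) => // Nk; by move: (hb k Nk); rewrite kT.
Qed.

Lemma sum_delta (V : zmodType) (X : V) i N :
  \sum_(0 <= j < N) (if i == j then X else 0) = if (i < N)%N then X else 0.
Proof.
elim: N => [|N IH]; first by rewrite big_geq.
rewrite big_nat_recr //= IH; case: (eqVneq i N) => [->|ne].
  by rewrite ltnn ltnSn /= add0r.
have -> : (i < N.+1)%N = (i < N)%N by apply/idP/idP; move: ne => /eqP; lia.
by rewrite /= addr0.
Qed.

Lemma half0 (C : numFieldType) (V : lmodType C) (x : V) : x = - x -> x = 0.
Proof.
move=> e; have : (2%:R : C) *: x = 0 by rewrite scaler_nat mulr2n {1}e addNr.
by move/eqP; rewrite scaler_eq0 pnatr_eq0 /= => /eqP.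
Qed.

Section Ops.
Variable C : numFieldType.
Local Notation DH := {malg C[basis]}.
Local Notation sgn := (@sgn C).

Lemma psiU j c (b : basis) : psi j (<< c *g b >> : DH) =
  if occupied b.2 j then 0
  else << ((-1) ^+ occ_above b.2 j * c) *g (b.1, toggle b.2 j) >>.
Proof.
rewrite /psi (@msuppU basis C); case: eqP => [->|_].
  by rewrite big_nil mulr0 (@monalgU0 basis C); case: ifP.
by rewrite big_seq_fset1 (@mcoeffUU basis C).
Qed.

Lemma dmulU k c (b : basis) : dmul k (<< c *g b >> : DH) =
  << c *g ((k +` b.1)%mset, b.2) >>.
Proof.
rewrite /dmul (@msuppU basis C); case: eqP => [->|_].
  by rewrite big_nil (@monalgU0 basis C).
by rewrite big_seq_fset1 (@mcoeffUU basis C).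
Qed.

Lemma dmul0 k : dmul k (0 : DH) = 0.
Proof. by rewrite /dmul msupp0 big_nil. Qed.

End Ops.

Section Ops2.
Variable C : numFieldType.
Local Notation DH := {malg C[basis]}.
Local Notation sgn := (@sgn C).
Lemma eq_big_seq_cond (V : zmodType) (I : eqType) (s : seq I) (P : pred I) (F G : I -> V) :
  (forall i, i \in s -> P i -> F i = G i) ->
  \sum_(i <- s | P i) F i = \sum_(i <- s | P i) G i.
Proof.
elim: s => [|a s IH] e; first by rewrite !big_nil.
rewrite !big_cons IH; last by move=> i si; apply: e; rewrite inE si orbT.
by case: ifP => // pa; rewrite e // inE eqxx.
Qed.

Definition qb (b : basis) : DH :=
  \sum_(j <- b.2 | (j < 0)%R)
     (-1) ^+ occ_above b.2 j *: << ((`|(j + 1)%R|%N +` b.1)%mset, toggle b.2 j) >>.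

Lemma term_eq j k c (b : basis) : j \in b.2 -> (j < 0)%R ->
  dmul k (psi j (<< c *g b >> : DH)) =
  c *: ((-1) ^+ occ_above b.2 j *: << ((k +` b.1)%mset, toggle b.2 j) >>).
Proof.
move=> jT jn.
have oc : occupied b.2 j = false by rewrite /occupied jT jn.
rewrite psiU oc dmulU.
rewrite scalerA scaleU mulrC.
done.
Qed.

Lemma Q_L (x : DH) : Q x = L qb x.
Proof.
rewrite /Q /L; apply: eq_bigr => b _.
rewrite /qb scaler_sumr; apply: eq_big_seq_cond => j jT jn.
exact: term_eq.
Qed.
Definition qN (N : nat) (b : basis) : DH :=
  \sum_(0 <= i < N) (if Negz i \in b.2 then
     sgn b.2 i *: << ((i +` b.1)%mset, toggle b.2 (Negz i)) >> else 0).

Definition hN (N : nat) (b : basis) : DH :=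
  \sum_(0 <= i < N) (if Negz i \in b.2 then 0 else
     ((b.1 i)%:R * sgn b.2 i) *: << ((b.1 `\ i)%mset, toggle b.2 (Negz i)) >>).

Definition wN (N : nat) (b : basis) : nat :=
  \sum_(0 <= i < N) (b.1 i + (Negz i \in b.2))%N.

Lemma qb_qN N b : bounded N b -> qb b = qN N b.
Proof.
move=> hb; rewrite /qb /qN (sum_neg _ (N := N)); last by move=> i /hb[].
apply: eq_bigr => i _.
have Ei : (`|(Negz i + 1)%R|)%N = i.
  rewrite NegzE; have -> : (- (i.+1)%:Z + 1 = - i%:Z)%R by lia.
  by rewrite abszN absz_nat.
by rewrite Ei /sgn.
Qed.

Lemma hN_widen N N' b : bounded N b -> (N <= N')%N -> hN N' b = hN N b.
Proof.
move=> hb le; rewrite /hN (big_cat_nat (leq0n N) le) /=.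
rewrite [X in _ + X]big1_seq ?addr0 // => i /andP[_]; rewrite mem_index_iota.
move=> /andP[Ni _]; have [-> _] := hb i Ni.
by case: ifP => _ //; rewrite mul0r scale0r.
Qed.

Lemma wN_widen N N' b : bounded N b -> (N <= N')%N -> wN N' b = wN N b.
Proof.
move=> hb le; rewrite /wN (big_cat_nat (leq0n N) le) /=.
rewrite [X in (_ + X)%N]big1_seq ?addn0 // => i /andP[_]; rewrite mem_index_iota.
move=> /andP[Ni _]; have [-> /negbTE ->] := hb i Ni.
by [].
Qed.

Definition h (b : basis) : DH := hN (bnd b) b.
Definition w (b : basis) : nat := wN (bnd b) b.

Lemma h_hN N b : bounded N b -> h b = hN N b.
Proof.
move=> hb; rewrite /h -(@hN_widen _ (maxn N (bnd b))) ?leq_maxr //;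
  last exact: bnd_bounded.
by rewrite (@hN_widen N) ?leq_maxl.
Qed.

Lemma w_wN N b : bounded N b -> w b = wN N b.
Proof.
move=> hb; rewrite /w -(@wN_widen _ (maxn N (bnd b))) ?leq_maxr //;
  last exact: bnd_bounded.
by rewrite (@wN_widen N) ?leq_maxl.
Qed.

End Ops2.

Section Ops3.
Variable C : numFieldType.
Local Notation DH := {malg C[basis]}.
Local Notation sgn := (@sgn C).
Local Notation qb := (@qb C).
Local Notation qN := (@qN C).
Local Notation hN := (@hN C).
Local Notation h := (@h C).
Definition FA (m : {mset nat}%mset) (T : state) (i i' : nat) : DH :=
  if Negz i \in T then
    (if Negz i' \in toggle T (Negz i) then
      (sgn T i * sgn (toggle T (Negz i)) i') *:
        << ((i' +` (i +` m))%mset, toggle (toggle T (Negz i)) (Negz i')) >>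
     else 0)
  else 0.

Lemma FA_anti m T i i' : FA m T i i' = - FA m T i' i.
Proof.
rewrite /FA; case: (eqVneq i i') => [<-|ne].
  case: (boolP (Negz i \in T)) => iT; last by rewrite oppr0.
  by rewrite in_toggle eqxx iT /= oppr0.
have ne1 : (Negz i' == Negz i) = false by rewrite eqNegz eq_sym (negbTE ne).
have ne2 : (Negz i == Negz i') = false by rewrite eqNegz (negbTE ne).
rewrite !in_toggle ne1 ne2 /=.
case: (boolP (Negz i \in T)) => iT; case: (boolP (Negz i' \in T)) => i'T /=;
  rewrite ?oppr0 //.
have e : sgn T i * sgn (toggle T (Negz i)) i' = - (sgn T i' * sgn (toggle T (Negz i')) i).
  rewrite !sgn_toggle.
  case: (ltngtP i i') => h.
  - ring.
  - ring.
  - by move: ne; rewrite h eqxx.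
by rewrite msetDCA toggleC e scaleNr.
Qed.

Lemma QQ_basis b : L qb (qb b) = 0.
Proof.
case: b => m T; set N := bnd (m, T); have hb := @bnd_bounded (m, T).
rewrite (qb_qN C hb) /qN Lsum.
have -> : \sum_(0 <= i < N) L qb (if Negz i \in (m, T).2 then
     sgn (m, T).2 i *: << ((i +` (m, T).1)%mset, toggle (m, T).2 (Negz i)) >> else 0)
   = \sum_(0 <= i < N) \sum_(0 <= i' < N) FA m T i i'.
  apply: eq_big_nat => i /andP[_ iN].
  case: (boolP (Negz i \in T)) => iT.
    rewrite LZ L1 (qb_qN C (bounded_q hb iN)) /qN scaler_sumr.
    apply: eq_bigr => i' _; rewrite /FA iT /=.
    case: (boolP (Negz i' \in toggle T (Negz i))) => i'T.
      by rewrite scalerA.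
    by rewrite scaler0.
  rewrite L0 big1 // => i' _; rewrite /FA (negbTE iT).
  by [].
apply: half0.
rewrite {1}exchange_big -sumrN; apply: eq_bigr => a _.
rewrite -sumrN; apply: eq_bigr => c _; exact: FA_anti.
Qed.
Definition FB (m : {mset nat}%mset) (T : state) (i i' : nat) : DH :=
  if Negz i \in T then 0 else
  if Negz i' \in toggle T (Negz i) then
    ((m i)%:R * sgn T i * sgn (toggle T (Negz i)) i') *:
      << ((i' +` (m `\ i))%mset, toggle (toggle T (Negz i)) (Negz i')) >>
  else 0.

Definition FC (m : {mset nat}%mset) (T : state) (i' i : nat) : DH :=
  if Negz i' \in T then
    (if Negz i \in toggle T (Negz i') then 0 else
      (sgn T i' * (((i' +` m)%mset i)%:R * sgn (toggle T (Negz i')) i)) *: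
        << (((i' +` m) `\ i)%mset, toggle (toggle T (Negz i')) (Negz i)) >>)
  else 0.

Lemma FBC m T i i' : FB m T i i' + FC m T i' i =
  if i == i' then ((m i + (Negz i \in T))%N)%:R *: << (m, T) >> else 0.
Proof.
rewrite /FB /FC; case: (eqVneq i i') => [<-|ne].
  rewrite !in_toggle eqxx.
  case: (boolP (Negz i \in T)) => iT /=.
    rewrite add0r sgn_toggle ltnn mul1r mset1DE eqxx msetD1K toggleK.
    have e : sgn T i * ((true + m i)%N%:R * sgn T i) = (m i + true)%N%:R.
      by rewrite mulrCA sgn_sq mulr1 addnC.
    by rewrite e.
  rewrite addr0 sgn_toggle ltnn mul1r -mulrA sgn_sq mulr1 toggleK addn0.
  case: (eqVneq (m i) 0%N) => [mi0|mi].
  have H : forall (c : C) (X Y : DH), c = 0 -> c *: X = c *: Y.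
    by move=> c X Y ->; rewrite !scale0r.
  by apply: H; rewrite mi0.
  by rewrite msetB1K // -mset_neq0.
have ne1 : (Negz i' == Negz i) = false by rewrite eqNegz eq_sym (negbTE ne).
have ne2 : (Negz i == Negz i') = false by rewrite eqNegz (negbTE ne).
rewrite !in_toggle ne1 ne2 /=.
case: (boolP (Negz i \in T)) => iT; case: (boolP (Negz i' \in T)) => i'T /=;
  rewrite ?addr0 ?add0r //.
have EB : ((i' +` (m `\ i))%mset, toggle (toggle T (Negz i)) (Negz i')) =
          (((i' +` m) `\ i)%mset, toggle (toggle T (Negz i')) (Negz i)).
  congr pair; last exact: toggleC.
  apply/msetP => k; rewrite !(mset1DE, msetB1E).
  case: (eqVneq k i) => [->|ki]; first by rewrite (negbTE ne) /= !add0n.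
  by rewrite /= !subn0.
have e : (m i)%:R * sgn T i * sgn (toggle T (Negz i)) i' +
         sgn T i' * (((i' +` m)%mset i)%:R * sgn (toggle T (Negz i')) i) = 0.
  rewrite mset1DE (negbTE ne) add0n !sgn_toggle.
  case: (ltngtP i i') => h.
  - ring.
  - ring.
  - by move: ne; rewrite h eqxx.
by rewrite EB -scalerDl e scale0r.
Qed.

Lemma HB_basis b : L qb (h b) + L h (qb b) = (w b)%:R *: << b >>.
Proof.
case: b => m T; have hb := @bnd_bounded (m, T).
rewrite (h_hN C hb) (qb_qN C hb) /hN /qN !Lsum.
apply: (@etrans _ _ ((\sum_(0 <= i < bnd (m, T)) \sum_(0 <= i' < bnd (m, T)) FB m T i i')
   + (\sum_(0 <= i' < bnd (m, T)) \sum_(0 <= i < bnd (m, T)) FC m T i' i))).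
  apply: congr2.
    apply: eq_big_nat => i /andP[_ iN].
    case: (boolP (Negz i \in T)) => iT.
      rewrite L0 big1 // => i' _; rewrite /FB iT.
      by [].
    rewrite LZ L1 (qb_qN C (bounded_h hb iN)) /qN scaler_sumr.
    apply: eq_bigr => i' _; rewrite /FB (negbTE iT) /=.
    case: (boolP (Negz i' \in toggle T (Negz i))) => i'T.
      by rewrite scalerA.
    by rewrite scaler0.
  apply: eq_big_nat => i' /andP[_ i'N].
  case: (boolP (Negz i' \in T)) => i'T.
    rewrite LZ L1 (h_hN C (bounded_q hb i'N)) /hN scaler_sumr.
    apply: eq_bigr => i _; rewrite /FC i'T /=.
    case: (boolP (Negz i \in toggle T (Negz i'))) => iT.
      by rewrite scaler0.
    by rewrite scalerA.
  rewrite L0 big1 // => i _; rewrite /FC (negbTE i'T).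
  by [].
rewrite [X in _ + X]exchange_big -big_split.
apply: (@etrans _ _ (\sum_(0 <= i < bnd (m, T)) ((m i + (Negz i \in T))%N)%:R *: << (m, T) >>)).
  apply: eq_big_nat => i /andP[_ iN]; rewrite -big_split.
  rewrite (eq_bigr _ (fun i' _ => FBC m T i i')).
  by rewrite sum_delta iN.
by rewrite -scaler_suml -natr_sum.
Qed.

Lemma w_q b i : Negz i \in b.2 -> (i < bnd b)%N ->
  w ((i +` b.1)%mset, toggle b.2 (Negz i)) = w b.
Proof.
case: b => m T iT iN; have hb := @bnd_bounded (m, T).
rewrite (w_wN (bounded_q hb iN)) /w /wN.
apply: eq_big_nat => k _ /=.
rewrite mset1DE in_toggle eqNegz.
case: (eqVneq k i) => [->|_] /=.
  by rewrite iT /=; lia.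
lia.
Qed.

Lemma S_qb b : L (fun b' => ((w b')%:R)^-1 *: << b' >>) (qb b) = ((w b)%:R)^-1 *: qb b.
Proof.
case: b => m T; have hb := @bnd_bounded (m, T).
rewrite (qb_qN C hb) /qN Lsum scaler_sumr.
apply: eq_big_nat => i /andP[_ iN].
case: (boolP (Negz i \in T)) => iT.
  rewrite LZ L1 (@w_q (m, T) i iT iN).
  by rewrite !scalerA mulrC.
by rewrite L0 scaler0.
Qed.

Lemma sector_h b (k : int) : 2 * charge b.2 - 1 = k + 2 -> in_sector k (h b).
Proof.
case: b => m T e; have hb := @bnd_bounded (m, T).
rewrite (h_hN C hb) /hN; apply: sector_sum => i _.
case: (boolP (Negz i \in T)) => iT; first exact: sector0.
apply: sectorZ; apply: sectorU.
rewrite /= charge_toggle (negbTE iT).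
move: e => /= e; lia.
Qed.

End Ops3.

Lemma leq_term N (F : nat -> nat) n : (n < N)%N -> (F n <= \sum_(0 <= i < N) F i)%N.
Proof.
elim: N => // N IH; rewrite ltnS leq_eqVlt => /orP[/eqP->|hn]; rewrite big_nat_recr //=.
  exact: leq_addl.
exact: leq_trans (IH hn) (leq_addr _ _).
Qed.

Lemma w_pos b : (charge b.2 < 0)%R -> (0 < w b)%N.
Proof.
case: b => m T /= hc.
have [x xT xn] : exists2 x, x \in T & (x < 0)%R.
  case: (boolP ([fset x in T | (x < 0)%R]%fset == fset0)) => [/eqP E|/fset0Pn [x]].
    by move: hc; rewrite /charge E cardfs0; lia.
  by rewrite inE => /andP[xT xn]; exists x.
case: x xT xn => [k|k] xT xn; first by move: xn; lia.
have hb := @bnd_bounded (m, T).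
have kN : (k < bnd (m, T))%N.
  by rewrite ltnNge; apply/negP => /hb [_]; rewrite xT.
rewrite /w /wN; apply: leq_trans _ (leq_term _ kN).
by rewrite /= xT addn1.
Qed.

Theorem lemma1 (R : realType) (n : nat) :
  (1 <= n)%N ->
  forall x : DH R[i],
    in_sector (- (2 * n%:Z + 1)) x ->
    (Q x = 0 <-> exists y : DH R[i], in_sector (- (2 * n%:Z + 3)) y /\ Q y = x).
Proof.
move=> n1 x hx; split.
- move=> Qx.
  pose W (b : basis) : R[i] := ((w b)%:R)^-1.
  exists (L (fun b => W b *: h _ b) x); split.
    apply: sectorL => b bx; apply: sectorZ; apply: sector_h.
    have E : forall c : int, 2 * c - 1 = - (2 * n%:Z + 1) -> 2 * c - 1 = - (2 * n%:Z + 3) + 2.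
      by move=> c; lia.
    exact: E (hx b bx).
  rewrite Q_L Lcomp.
  have wnz : forall b, b \in msupp x -> (w b)%:R != (0 : R[i]).
    move=> b bx; rewrite pnatr_eq0 -lt0n; apply: w_pos.
    have E : forall c : int, 2 * c - 1 = - (2 * n%:Z + 1) -> c < 0.
      by move=> c; lia.
    exact: E (hx b bx).
  rewrite (@Lext _ _ (fun b => << b >> + - (W b *: L (h _) (qb _ b)))); last first.
    move=> b bx; rewrite LZ.
    have e := HB_basis _ b.
    rewrite -[L (qb _) (h _ b)](addrK (L (h _) (qb _ b))) e scalerBr scalerA mulVf ?wnz //.
    by rewrite scale1r.
  rewrite (Lfun_add (fun b => << b >>) (fun b => - (W b *: L (h _) (qb _ b)))).
  rewrite Lfun_opp Lid (Lfun_scale (h _) W (qb _)).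
  have -> : L (fun b => W b *: qb _ b) x =
            L (fun b => L (fun b' => W b' *: << b' >>) (qb _ b)) x.
    by apply: Lext => b _; rewrite S_qb.
  by rewrite -Lcomp -Q_L Qx !L0 subr0.
- move=> [y [_ <-]].
  rewrite !Q_L Lcomp (@Lext _ _ (fun _ => 0)) ?Lfun0 // => b _.
  exact: QQ_basis.
Qed.
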